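(* For every $T>0$, $$\lim_{\lambda\to\infty}\liminf_{m\to\infty}\mathbb{P}^{(m)}_\sigma\Big(\sup_{s\le T}|x(s)|_{\mathbb{A}_{\mathbb{Q}}}<\lambda\Big)=1.$$
   Context: Fix a real exponent $b>0$ and a sequence $\sigma=(\sigma_p)_{p\in\mathcal P}$ of nonnegative reals indexed by the set $\mathcal P$ of primes with $\sum_p\sigma_p<\infty$. For a prime $p$, $\mathbb{Q}_p$ denotes the $p$-adic numbers with absolute value $|\cdot|_p$ and $\mathbb{Z}_p$ its closed unit ball. Let $G_p\subset\mathbb{Q}_p$ be the set of $p$-adic numbers of the form $\sum_{k<0}a_kp^k$ with $a_k\in\{0,\dots,p-1\}$, only finitely many nonzero; $G_p$ is a set of representatives of $\mathbb{Q}_p/\mathbb{Z}_p$ and is given the group structure of $\mathbb{Q}_p/\mathbb{Z}_p$. Let $X^{(p)}$ be a $G_p$-valued random variable with $\Pr(|X^{(p)}|_p=p^k)=(p^b-1)p^{-kb}$ for every integer $k\ge1$, and, conditionally on $|X^{(p)}|_p=p^k$, uniformly distributed on the finite set $\{x\in G_p:|x|_p=p^k\}$. Let $X^{(p)}_1,X^{(p)}_2,\dots$ be i.i.d. copies of $X^{(p)}$ and $S^{(p)}_n=X^{(p)}_1+\dots+X^{(p)}_n$ (sum in the group $G_p$), $S^{(p)}_0=0$. Put $D_p=\frac{p^b(p-1)}{p^{b+1}-1}\sigma_p$. For an integer $m\ge0$, let $\mathbb{P}^{(m)}_p$ be the law on $D(\mathbb{Q}_p)$ (càdlàg paths $[0,\infty)\to\mathbb{Q}_p$)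 of $t\mapsto p^mS^{(p)}_{\lfloor D_pp^{mb}t\rfloor}$, and $\mathbb{P}^{(m)}_\sigma=\prod_{p}\mathbb{P}^{(m)}_p$ the product measure on $\prod_pD(\mathbb{Q}_p)$ (independent components). For $y=(y_p)\in\prod_p\mathbb{Q}_p$ write $|y|_{\mathbb{A}_{\mathbb{Q}}}=\sup_p|y_p|_p/p$ (the adelic absolute value on $\mathbb{A}_{\mathbb{Q}}=\{y: y_p\in\mathbb{Z}_p\text{ for all but finitely many }p\}$). *)

(* Defs.v *)
From HB Require Import structures.
From mathcomp Require Import all_boot all_order all_algebra.
From mathcomp Require Import all_classical all_reals all_analysis.
Set Implicit Arguments. Unset Strict Implicit. Unset Printing Implicit Defensive.
Import Order.TTheory GRing.Theory Num.Theory.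
Local Open Scope ring_scope.

Definition padic_abs {R : realType} (p : nat) (q : rat) : R :=
  if q == 0 then 0
  else (p%:R : R) ^ ((logn p (`|denq q|%N))%:Z - (logn p (`|numq q|%N))%:Z).

(* G_p, the set of p-adic numbers sum_{k<0} a_k p^k with finitely many nonzero
   digits: exactly the rationals a / p^n with 0 <= a < p^n, i.e. rationals in
   [0,1) whose denominator is a power of p. *)
Definition in_Gp (p : nat) (q : rat) : Prop :=
  0 <= q /\ q < 1 /\ exists n : nat, denq q = (p ^ n)%:Z.

(* Addition in G_p (group structure of Q_p/Z_p transported to the
   representatives G_p): x + y reduced mod Z_p. For x, y in G_p, x+y is in
   [0,2). *)
Definition Gp_add (x y : rat) : rat := if 1 <= x + y then x + y - 1 else x + y.

(* Random walk S^{(p)}_n = X^{(p)}_1 + ... + X^{(p)}_n in G_p, where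
   X^{(p)}_{k+1} is represented by X p k. *)
Fixpoint Swalk {Omega : Type} (X : nat -> nat -> Omega -> rat) (p n : nat)
  (w : Omega) : rat :=
  match n with
  | 0 => 0
  | n'.+1 => Gp_add (Swalk X p n' w) (X p n' w)
  end.

Definition Dp {R : realType} (b : R) (sigma : nat -> R) (p : nat) : R :=
  (p%:R `^ b) * (p%:R - 1) / (p%:R `^ (b + 1) - 1) * sigma p.

Definition xpath {R : realType} {Omega : Type} (X : nat -> nat -> Omega -> rat)
  (b : R) (sigma : nat -> R) (m p : nat) (t : R) (w : Omega) : rat :=
  (p ^ m)%:R * Swalk X p (Num.truncn (Dp b sigma p * (p%:R `^ (m%:R * b)) * t)) w.

(* The event { sup_{s <= T} |x(s)|_{A_Q} < lambda } for the m-th rescaling,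
   where |y|_{A_Q} = sup_p |y_p|_p / p. *)
Definition sup_event {R : realType} {Omega : Type}
  (X : nat -> nat -> Omega -> rat) (b : R) (sigma : nat -> R)
  (m : nat) (T lambda : R) : set Omega :=
  [set w | (ereal_sup [set r : \bar R | exists p : nat, exists s : R,
        [/\ prime p, (0 <= s)%R, (s <= T)%R &
            r = (padic_abs p (xpath X b sigma m p s w) / p%:R)%:E]]
      < lambda%:E)%E].

(* Main.v *)
Require Import Defs.
From HB Require Import structures.
From mathcomp Require Import all_boot all_order all_algebra.
From mathcomp Require Import all_classical all_reals all_analysis.
From mathcomp Require Import ring lra zify.
Import Order.TTheory GRing.Theory Num.Theory.
Import numFieldNormedType.Exports.
Local Open Scope ring_scope.
Local Open Scope classical_set_scope.


Definition Inv (p E : nat) (x : rat) := exists a : int, x = a%:~R / (p ^ E)%:R.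

Lemma pexp_neq0 (p E : nat) : (0 < p)%N -> ((p ^ E)%:R : rat) != 0.
Proof. by move=> p0; rewrite pnatr_eq0 expn_eq0 negb_and -lt0n p0. Qed.

Lemma Inv_le p E E' x : (0 < p)%N -> (E <= E')%N -> Inv p E x -> Inv p E' x.
Proof.
move=> p0 le [a ->]; exists (a * (p ^ (E' - E))%:Z).
have h1 := @pexp_neq0 p (E' - E) p0; have h2 := @pexp_neq0 p E p0.
rewrite -(subnK le) expnD natrM rmorphM /= subnK //.
rewrite -[((p ^ (E' - E))%:Z)%:~R]/(((p ^ (E' - E))%:R : rat)).
by field; apply/andP.
Qed.

Lemma Inv_add p E x y : (0 < p)%N -> Inv p E x -> Inv p E y -> Inv p E (x + y).
Proof.
move=> p0 [a ->] [c ->]; exists (a + c); rewrite rmorphD /=.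
by field; apply: pexp_neq0.
Qed.

Lemma Inv_sub1 p E x : (0 < p)%N -> Inv p E x -> Inv p E (x - 1).
Proof.
move=> p0 [a ->]; exists (a - (p ^ E)%:Z); rewrite rmorphB /=.
rewrite -[((p ^ E)%:Z)%:~R]/(((p ^ E)%:R : rat)).
by field; apply: pexp_neq0.
Qed.

Lemma Inv_Gp_add p E x y : (0 < p)%N -> Inv p E x -> Inv p E y -> Inv p E (Gp_add x y).
Proof.
move=> p0 hx hy; rewrite /Gp_add; case: ifP => _; last exact: Inv_add.
by apply: Inv_sub1 => //; apply: Inv_add.
Qed.

Lemma Inv_Swalk (Omega : Type) (X : nat -> nat -> Omega -> rat) p E n w :
  (0 < p)%N -> (forall k, (k < n)%N -> Inv p E (X p k w)) -> Inv p E (Swalk X p n w).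
Proof.
move=> p0; elim: n => [|n IH] h /=.
  by exists 0; rewrite mul0r.
apply: Inv_Gp_add => //; last exact: h.
by apply: IH => k kn; apply: h; apply: ltnW.
Qed.

Lemma padic_Gp {R : realType} p x : prime p -> in_Gp p x -> x != 0 ->
  exists n : nat, (0 < n)%N /\ denq x = (p ^ n)%:Z /\ (padic_abs p x : R) = (p ^ n)%:R.
Proof.
move=> pp [x0 [x1 [n dn]]] xn0.
have n0 : (0 < n)%N.
  rewrite lt0n; apply/negP => /eqP n0; move: dn; rewrite n0 expn0 => d1.
  have xi : x = (numq x)%:~R by rewrite numqE d1 mulr1.
  have h0 : (0 : rat) < (numq x)%:~R by rewrite -xi lt_def xn0 x0.
  have h1 : ((numq x)%:~R : rat) < 1 by rewrite -xi.
  rewrite ltr0z in h0; rewrite ltrz1 in h1.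
  by move: h0 h1; case: (numq x) => [[|k]|k].
exists n; split=> //; split=> //.
rewrite /padic_abs (negbTE xn0) dn.
have -> : `|(p ^ n)%:Z|%N = (p ^ n)%N by [].
rewrite pfactorK //.
rewrite (@logn_coprime p `|numq x|) ?subr0; last first.
  have := coprime_num_den x; rewrite dn /= => cop.
  rewrite coprime_sym; apply: (coprime_dvdr _ cop) => //.
  by rewrite -(expn1 p) dvdn_exp2l.
by rewrite natrX -exprnP.
Qed.

Lemma Gp_Inv {R : realType} p x (r : R) : prime p -> in_Gp p x ->
  (padic_abs p x : R) <= r -> Inv p (trunc_log p (Num.truncn r)) x.
Proof.
move=> pp hx hr.
have [->|xn0] := eqVneq x 0; first by exists 0; rewrite mul0r.
have [n [n0 [dn ha]]] := @padic_Gp R p x pp hx xn0.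
have p1 : (1 < p)%N by apply: prime_gt1.
apply: (@Inv_le p n); first by apply: ltnW.
  apply: trunc_log_max => //.
  rewrite truncn_ge_nat; first by rewrite -ha.
  by apply: le_trans hr; rewrite ha.
exists (numq x).
by rewrite -[in LHS](divq_num_den x) dn.
Qed.

Lemma padic_le_logden {R : realType} p y : (1 < p)%N ->
  (padic_abs p y : R) <= (p ^ (logn p `|denq y|))%:R.
Proof.
move=> p1; rewrite /padic_abs; case: ifP => _.
  by rewrite ler0n.
have pn0 : ((p%:R : R) != 0) by rewrite pnatr_eq0; case: p p1.
rewrite expfzDr // -!exprnP -invr_expz -exprnP natrX.
rewrite -[X in _ <= X]mulr1 ler_wpM2l //.
have pg : (1 : R) <= p%:R by rewrite ler1n; apply: ltnW.
rewrite invf_le1; last by rewrite exprn_gt0 // (lt_le_trans ltr01 pg).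
by rewrite exprn_ege1.
Qed.

Lemma scaled_bound {R : realType} p m E S : prime p -> Inv p E S ->
  (padic_abs p ((p ^ m)%:R * S) : R) <= (p ^ (E - m))%:R.
Proof.
move=> pp [a ->].
have p0 : (0 < p)%N by apply: prime_gt0.
have p1 : (1 < p)%N by apply: prime_gt1.
set y := _ * _.
set d := (p ^ (E - m))%N.
set z := a * (p ^ (m + (E - m) - E))%:Z.
have eq1 : y * d%:R = z%:~R.
  have e : (m + (E - m) = (m + (E - m) - E) + E)%N by lia.
  rewrite /y /d /z rmorphM /=.
  rewrite -[((p ^ _)%:Z)%:~R]/(((p ^ (m + (E - m) - E))%:R : rat)).
  have h1 := @pexp_neq0 p E p0.
  have -> : ((p ^ (m + (E - m) - E))%:R : rat) = (p ^ m)%:R * (p ^ (E - m))%:R / (p ^ E)%:R.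
    apply/esym; rewrite -natrM -expnD {1}e expnD natrM mulfK //.
  by field.
have eq2 : numq y * d%:Z = z * denq y.
  apply: (@intr_inj rat); rewrite [LHS]rmorphM [RHS]rmorphM /= numqE -eq1.
  rewrite -[(d%:Z)%:~R]/((d%:R : rat)).
  by rewrite mulrAC.
have dv : (denq y %| d%:Z)%Z.
  have cop : coprimez (denq y) (numq y).
    by rewrite /coprimez /gcdz gcdnC; apply: coprime_num_den.
  rewrite -(Gauss_dvdzr _ cop) eq2; apply: dvdz_mull; apply: dvdzz.
rewrite dvdzE /= in dv.
apply: (le_trans (@padic_le_logden R p y p1)).
rewrite ler_nat leq_exp2l //.
have hd : (0 < d)%N by rewrite expn_gt0 p0.
have := dvdn_leq_log p hd dv.
by rewrite pfactorK.
Qed.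

Lemma val_bound {R : realType} (Omega : Type) (X : nat -> nat -> Omega -> rat)
  p m n (c : R) w : prime p -> 1 <= c ->
  (forall k, (k < n)%N -> in_Gp p (X p k w) /\
       (padic_abs p (X p k w) : R) <= c * (p ^ m.+1)%:R) ->
  (padic_abs p ((p ^ m)%:R * Swalk X p n w) : R) / p%:R <= c.
Proof.
move=> pp c1 h.
have p0 : (0 < p)%N by apply: prime_gt0.
have p1 : (1 < p)%N by apply: prime_gt1.
have pR : (0 : R) < p%:R by rewrite ltr0n.
set E := trunc_log p (Num.truncn (c * (p ^ m.+1)%:R)).
have hI : Inv p E (Swalk X p n w).
  apply: Inv_Swalk => // k kn; have [g b] := h k kn; exact: Gp_Inv.
have := @scaled_bound R p m E _ pp hI.
move=> hb; rewrite ler_pdivrMr //; apply: (le_trans hb).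
have [Em|Em] := leqP E m.
  have -> : (E - m = 0)%N by apply/eqP; rewrite subn_eq0.
  rewrite expn0; apply: (@le_trans _ _ (1 * p%:R)); first by rewrite mul1r ler1n; apply: ltnW.
  by rewrite ler_wpM2r // ltW.
have hc : (0 < Num.truncn (c * (p ^ m.+1)%:R))%N.
  rewrite truncn_gt0; apply: (le_trans c1); rewrite -[X in X <= _]mulr1 ler_wpM2l //.
    by apply: le_trans c1.
  by rewrite ler1n expn_gt0 p0.
have hE := trunc_logP p1 hc.
have cp : (0 : R) <= c * (p ^ m.+1)%:R by rewrite mulr_ge0 // (le_trans ler01 c1).
have hE' : ((p ^ E)%:R : R) <= c * (p ^ m.+1)%:R.
  have := truncn_le (c * (p ^ m.+1)%:R); rewrite cp => tl.
  by apply: le_trans tl; rewrite ler_nat.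
have pm : (0 : R) < (p ^ m)%:R by rewrite ltr0n expn_gt0 p0.
rewrite -(ler_pM2r pm) -natrM -expnD subnK; last by apply: ltnW.
by rewrite -mulrA -natrM -expnS.
Qed.


Lemma fib_meas d (Omega : measurableType d) (f : Omega -> rat) :
  (forall q, measurable [set w | f w = q]) ->
  forall Q : rat -> Prop, measurable [set w | Q (f w)].
Proof.
move=> hf Q.
have -> : [set w | Q (f w)] =
   \bigcup_q (if pselect (Q q) then [set w | f w = q] else set0).
  apply/seteqP; split => [w /= Qw|w [q _]].
    by exists (f w) => //; case: pselect.
  by case: pselect => // Qq /= ->.
by apply: bigcupT_measurable_rat => q; case: pselect => Hq; [exact: hf|exact: measurable0].
Qed.

Lemma fib_op d (Omega : measurableType d) (f g : Omega -> rat) (op : rat -> rat -> rat) :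
  (forall q, measurable [set w | f w = q]) ->
  (forall q, measurable [set w | g w = q]) ->
  forall q, measurable [set w | op (f w) (g w) = q].
Proof.
move=> hf hg q.
have -> : [set w | op (f w) (g w) = q] =
   \bigcup_q1 ([set w | f w = q1] `&` [set w | op q1 (g w) = q]).
  apply/seteqP; split => [w /= h|w [q1 _ [/= <- h]]] //.
  by exists (f w).
apply: bigcupT_measurable_rat => q1; apply: measurableI; first exact: hf.
exact: (@fib_meas _ _ g hg (fun y => op q1 y = q)).
Qed.

Lemma Swalk_meas d (Omega : measurableType d) (X : nat -> nat -> Omega -> rat) p :
  (forall k q, measurable [set w | X p k w = q]) ->
  forall n q, measurable [set w | Swalk X p n w = q].
Proof.
move=> hX; elim => [|n IH] q /=.
  case: (pselect (0 = q)) => h.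
    by rewrite (_ : [set _ | _] = setT) //; apply/seteqP; split.
  by rewrite (_ : [set _ | _] = set0) //; apply/seteqP; split.
exact: (@fib_op _ _ _ _ Gp_add IH (hX n)).
Qed.

Lemma esup_lt {R : realType} (S : set \bar R) (l : R) :
  (ereal_sup S < l%:E)%E <->
  exists n : nat, forall x, S x -> (x <= (l - n.+1%:R^-1)%:E)%E.
Proof.
split.
  case hs : (ereal_sup S) => [r| |] // hl.
    rewrite lte_fin in hl.
    exists (Num.truncn ((l - r)^-1)) => x Sx.
    apply: (le_trans (ereal_sup_ubound Sx)); rewrite hs lee_fin.
    have lr : 0 < l - r by rewrite subr_gt0.
    have h0 : 0 <= (l - r)^-1 by rewrite invr_ge0 ltW.
    have := truncn_itv h0; case/andP => _ h2.
    move: h2; set N := Num.truncn _ => h2.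
    have h3 : (N.+1%:R)^-1 < l - r.
      rewrite -[l - r]invrK ltf_pV2 //.
        by rewrite posrE ltr0n.
      by rewrite posrE invr_gt0.
    by rewrite lerBrDr addrC -lerBrDr; exact: ltW.
  exists 0%N => x Sx; have := ereal_sup_ubound Sx; rewrite hs.
  by rewrite leeNy_eq => /eqP ->; rewrite leNye.
case => n h.
apply: (@le_lt_trans _ _ (l - n.+1%:R^-1)%:E); first exact: ub_ereal_sup.
by rewrite lte_fin gtrBl invr_gt0 ltr0n.
Qed.

Lemma event_meas {R : realType} (b : R) (sigma : nat -> R) d (Omega : measurableType d)
  (X : nat -> nat -> Omega -> rat) :
  (forall p k q, prime p -> measurable [set w | X p k w = q]) ->
  forall m T lambda, measurable (sup_event X b sigma m T lambda).
Proof.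
move=> hX m T lambda.
pose Nf p (s : R) := Num.truncn (Dp b sigma p * p%:R `^ (m%:R * b) * s).
have -> : sup_event X b sigma m T lambda =
  \bigcup_n \bigcap_(p in [set p | prime p])
     \bigcap_(k in [set k | exists s, 0 <= s /\ s <= T /\ k = Nf p s])
     [set w | (padic_abs p ((p ^ m)%:R * Swalk X p k w) : R) / p%:R
               <= lambda - n.+1%:R^-1].
  apply/seteqP; split => w.
    rewrite /sup_event /= => /esup_lt [n h]; exists n => // p pp k [s [s0 [sT ->]]].
    rewrite /= -lee_fin; apply: h; exists p, s; split => //.
  case=> n _ h; rewrite /sup_event /=; apply/esup_lt; exists n.
  move=> x [p [s [pp s0 sT ->]]]; rewrite lee_fin.
  by apply: (h p pp (Nf p s)); exists s.
apply: bigcupT_measurable => n; apply: bigcap_measurableType => p pp.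
apply: bigcap_measurableType => k _.
apply: (@fib_meas _ _ (fun w => Swalk X p k w)
  (@Swalk_meas _ _ X p (fun k q => hX p k q pp) k)
  (fun y => (padic_abs p ((p ^ m)%:R * y) : R) / p%:R <= lambda - n.+1%:R^-1)).
Qed.

Lemma powR_j {R : realType} (p : nat) (b : R) (j : nat) : (0 < p)%N ->
  (p%:R : R) `^ (- (j%:R * b)) = ((p%:R `^ b)^-1) ^+ j.
Proof.
move=> p0; rewrite -mulrN mulrC powRrM powR_mulrn; last exact: powR_ge0.
by rewrite powRN.
Qed.

Definition Ulev {R : realType} {Omega : Type} (X : nat -> nat -> Omega -> rat) p k J :=
  [set w | exists i, (0 < i <= J)%N /\ (padic_abs p (X p k w) : R) = (p%:R : R) ^+ i].

Lemma prob_levels {R : realType} (b : R) d (Omega : measurableType d)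
  (P : probability Omega R) (X : nat -> nat -> Omega -> rat) p k :
  prime p ->
  (forall q, measurable [set w | X p k w = q]) ->
  (forall (j : nat), (0 < j)%N ->
     P [set w | padic_abs p (X p k w) = (p%:R : R) ^+ j] =
     (((p%:R : R) `^ b - 1) * (p%:R : R) `^ (- (j%:R * b)))%:E) ->
  forall J, P (@Ulev R _ X p k J) = (1 - ((p%:R `^ b)^-1) ^+ J)%:E.
Proof.
move=> pp hm hd.
have p0 : (0 < p)%N by apply: prime_gt0.
have p1 : (1 < p)%N by apply: prime_gt1.
have pR : (1 : R) < p%:R by rewrite ltr1n.
set v := (p%:R : R) `^ b.
have v0 : 0 < v by apply: powR_gt0; apply: lt_trans pR.
elim => [|J IH].
  rewrite expr0 subrr (_ : Ulev _ _ _ _ = set0) ?measure0 //.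
  by apply/seteqP; split => // w [i [/andP[i0 iJ] _]]; move: i0; rewrite leqNgt (leq_ltn_trans iJ).
have -> : @Ulev R _ X p k J.+1 = @Ulev R _ X p k J `|`
     [set w | padic_abs p (X p k w) = (p%:R : R) ^+ J.+1].
  apply/seteqP; split => w.
    move=> [i [/andP[i0 iJ] h]]; rewrite leq_eqVlt in iJ; case/orP: iJ => [/eqP e|iJ].
      by right; rewrite /= h e.
    by left; exists i; split => //; rewrite i0.
  case=> [[i [/andP[i0 iJ] h]]|h].
    by exists i; split => //; rewrite i0 /= ltnW.
  by exists J.+1; split => //; rewrite /= leqnn.
rewrite (@measureU _ _ _ P).
- transitivity ((1 - v^-1 ^+ J)%:E +
     (((p%:R : R) `^ b - 1) * (p%:R : R) `^ (- (J.+1%:R * b)))%:E).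
    by congr (_ + _); [exact: IH|exact: hd].
  rewrite powR_j // -EFinD; congr (_%:E).
  have vn : v != 0 by rewrite gt_eqF.
  rewrite exprS; field.
  exact: vn.
- exact: (@fib_meas _ _ (X p k) hm (fun y => exists i, (0 < i <= J)%N /\ (padic_abs p y : R) = (p%:R : R) ^+ i)).
- exact: (@fib_meas _ _ (X p k) hm (fun y => (padic_abs p y : R) = (p%:R : R) ^+ J.+1)).
- apply/seteqP; split => // w [[i [/andP[i0 iJ] h]] /= h2].
  move: h; rewrite h2 -!natrX => /eqP; rewrite eqr_nat eqn_exp2l // => /eqP ei.
  by move: iJ; rewrite -ei ltnn.
Qed.

Lemma prob_bad {R : realType} (b : R) d (Omega : measurableType d)
  (P : probability Omega R) (X : nat -> nat -> Omega -> rat) p k (r : R) J :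
  prime p ->
  (forall q, measurable [set w | X p k w = q]) ->
  (forall (j : nat), (0 < j)%N ->
     P [set w | padic_abs p (X p k w) = (p%:R : R) ^+ j] =
     (((p%:R : R) `^ b - 1) * (p%:R : R) `^ (- (j%:R * b)))%:E) ->
  (p%:R : R) ^+ J <= r ->
  (P [set w | (r < padic_abs p (X p k w))%R] <= (((p%:R `^ b)^-1) ^+ J)%:E)%E.
Proof.
move=> pp hm hd hJ.
have p1 : (1 < p)%N by apply: prime_gt1.
have pR : (1 : R) <= p%:R by rewrite ler1n ltnW.
set B := [set w | (r < padic_abs p (X p k w))%R].
have mB : measurable B by exact: (@fib_meas _ _ (X p k) hm (fun y => r < (padic_abs p y : R))).
have mU : measurable (@Ulev R _ X p k J).
  exact: (@fib_meas _ _ (X p k) hm (fun y => exists i, (0 < i <= J)%N /\ (padic_abs p y : R) = (p%:R : R) ^+ i)).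
have dis : B `&` @Ulev R _ X p k J = set0.
  apply/seteqP; split => // w [/= hB [i [/andP[i0 iJ] h]]].
  move: hB; rewrite /B /= h => hB.
  have h' : (p%:R : R) ^+ i <= p%:R ^+ J by rewrite -!natrX ler_nat leq_exp2l.
  by have := lt_le_trans hB (le_trans h' hJ); rewrite ltxx.
have h1 := probability_le1 P (measurableU _ _ mB mU).
rewrite (@measureU _ _ _ P) // in h1.
move: h1; rewrite [X in (_ + X <= _)%E -> _](_ : _ = (1 - ((p%:R `^ b)^-1) ^+ J)%:E);
  last by exact: prob_levels.
set y := (X in (X + _ <= _)%E -> _).
have h0 : (0 <= y)%E by apply: measure_ge0.
change ((y + (1 - (p%:R `^ b)^-1 ^+ J)%:E <= 1)%E -> (y <= ((p%:R `^ b)^-1 ^+ J)%:E)%E).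
move: h0; case: y => [x| |] //=.
  by rewrite -EFinD !lee_fin => h0 h1; lra.
Qed.

Lemma powR_exprn' {R : realType} (x b : R) n : 0 <= x -> (x ^+ n) `^ b = (x `^ b) ^+ n.
Proof.
move=> x0; rewrite -powR_mulrn // -powRrM mulrC powRrM powR_mulrn //.
exact: powR_ge0.
Qed.

Lemma prob_bad2 {R : realType} (b : R) d (Omega : measurableType d)
  (P : probability Omega R) (X : nat -> nat -> Omega -> rat) p k (c : R) m :
  0 < b -> prime p -> 1 <= c ->
  (forall q, measurable [set w | X p k w = q]) ->
  (forall (j : nat), (0 < j)%N ->
     P [set w | padic_abs p (X p k w) = (p%:R : R) ^+ j] =
     (((p%:R : R) `^ b - 1) * (p%:R : R) `^ (- (j%:R * b)))%:E) ->
  (P [set w | (c * (p ^ m.+1)%:R < padic_abs p (X p k w))%R] <=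
     ((c `^ b * (p%:R `^ b) ^+ m)^-1)%:E)%E.
Proof.
move=> b0 pp c1 hm hd.
have p0 : (0 < p)%N by apply: prime_gt0.
have p1 : (1 < p)%N by apply: prime_gt1.
have pR : (0 : R) < p%:R by rewrite ltr0n.
set r := c * (p ^ m.+1)%:R.
have c0 : 0 < c by apply: lt_le_trans c1.
have r1 : 1 <= r.
  by rewrite /r mulr_ege1 // ler1n expn_gt0 p0.
have r0 : 0 <= r by apply: le_trans r1.
set J := trunc_log p (Num.truncn r).
have hc : (0 < Num.truncn r)%N by rewrite truncn_gt0.
have hJ : (p%:R : R) ^+ J <= r.
  have := truncn_le r; rewrite r0 => tl.
  apply: le_trans tl; rewrite -natrX ler_nat; exact: trunc_logP.
have hJ1 : r < (p%:R : R) ^+ J.+1.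
  have := truncn_itv r0; case/andP => _ h2.
  have h3 : ((Num.truncn r).+1%:R : R) <= (p%:R : R) ^+ J.+1.
    by rewrite -natrX ler_nat; exact: trunc_log_ltn.
  exact: (lt_le_trans h2 h3).
apply: (le_trans (@prob_bad R b d Omega P X p k r J pp hm hd hJ)).
rewrite lee_fin.
set v := (p%:R : R) `^ b.
have v0 : 0 < v by apply: powR_gt0.
rewrite exprVn lef_pV2 ?posrE ?mulr_gt0 ?exprn_gt0 ?powR_gt0 //.
rewrite -(ler_pM2r v0) -mulrA -exprSr -exprSr.
have : r `^ b <= ((p%:R : R) ^+ J.+1) `^ b.
  apply: ge0_ler_powR => //; first exact: ltW.
    by rewrite nnegrE exprn_ge0 // ltW.
  exact: ltW.
have e : r `^ b = c `^ b * v ^+ m.+1.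
  by rewrite /r powRM ?(ltW c0) ?ler0n // natrX powR_exprn' // ltW.
have e2 : ((p%:R : R) ^+ J.+1) `^ b = v ^+ J.+1 by rewrite powR_exprn' // ltW.
by rewrite -e -e2.
Qed.


Lemma einf_bounds {R : realType} (u : (\bar R)^nat) (a : \bar R) :
  (forall m, a <= u m <= 1)%E -> (a <= limn_einf u <= 1)%E.
Proof.
move=> h; rewrite limn_einf_lim; apply/andP; split.
  apply: lime_ge; first exact: is_cvg_einfs.
  apply: nearW => n; apply/ereal_infP => _ [k _ <-].
  by case/andP: (h k).
apply: lime_le; first exact: is_cvg_einfs.
apply: nearW => n; apply: ge_ereal_inf.
exists (u n); first by exists n => /=.
by case/andP: (h n).
Qed.

Lemma powR_inv_cvg {R : realType} (b K : R) : 0 < b ->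
  (fun x : R => 1 - K * ((x / 2) `^ b)^-1) x @[x --> +oo] --> (1 : R).
Proof.
move=> b0.
apply/cvgrPdist_le => e e0.
set a := (`|K| + 1) / e.
have a0 : 0 < a by rewrite divr_gt0 // ltr_pwDr.
exists (2 * a `^ b^-1); split; first by rewrite num_real.
move=> t Mt.
have t0 : 0 < t / 2.
  rewrite divr_gt0 //; apply: le_lt_trans Mt; rewrite mulr_ge0 //; exact: powR_ge0.
have ha : a <= (t / 2) `^ b.
  have h1 : a `^ b^-1 <= t / 2 by rewrite ler_pdivlMr // mulrC ltW.
  have : (a `^ b^-1) `^ b <= (t / 2) `^ b.
    by apply: ge0_ler_powR => //; [exact: ltW|rewrite nnegrE powR_ge0|rewrite nnegrE ltW].
  by rewrite -powRrM mulVf ?gt_eqF // powRr1 // ltW.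
have pb : 0 < (t / 2) `^ b by apply: powR_gt0.
rewrite opprB addrC subrK normrM normfV (ger0_norm (ltW pb)).
rewrite ler_pdivrMr //; apply: (@le_trans _ _ (e * a)).
  rewrite /a mulrC divfK ?gt_eqF //; lra.
by rewrite ler_wpM2l // ltW.
Qed.


Lemma fin_bound {R : realType} d (Omega : measurableType d) (P : probability Omega R)
  (G : nat -> set Omega) (beta : R) :
  (forall k, measurable (G k)) -> (forall k, (P (G k) <= beta%:E)%E) ->
  forall N, (P (\big[setU/set0]_(k < N) G k) <= (N%:R * beta)%:E)%E.
Proof.
move=> hm hb; elim => [|N IH].
  by rewrite big_ord0 measure0 mul0r.
rewrite big_ord_recr /=.
apply: le_trans (measureU2 P _ _) _.
- by apply: bigsetU_measurable => i _.
- exact: hm.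
rewrite -addn1 natrD mulrDl mul1r EFinD.
exact: (leeD IH (hb N)).
Qed.

Lemma Dp_bounds {R : realType} (b : R) (sigma : nat -> R) p :
  prime p -> 0 < b -> 0 <= sigma p -> 0 <= Dp b sigma p <= sigma p.
Proof.
move=> pp b0 s0.
have p1 : (1 < p)%N by apply: prime_gt1.
have pR : (1 : R) < p%:R by rewrite ltr1n.
set q := (p%:R : R) `^ b.
have q1 : 1 <= q.
  have h1 : (1 : R) = 1 `^ b by rewrite powR1.
  rewrite /q [X in X <= _]h1; apply: ge0_ler_powR; rewrite ?nnegrE ?ltW //.
  exact: (lt_trans ltr01 pR).
have e : (p%:R : R) `^ (b + 1) = q * p%:R.
  have p0 : (p%:R : R) != 0 by rewrite pnatr_eq0 -lt0n prime_gt0.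
  rewrite powRD; last by rewrite p0 implybT.
  by rewrite powRr1 // ltW // (lt_trans ltr01 pR).
rewrite /Dp -/q e.
have den : 0 < q * p%:R - 1 by nra.
have r0 : 0 <= q * (p%:R - 1) / (q * p%:R - 1).
  apply: divr_ge0; last exact: ltW.
  by apply: mulr_ge0; [exact: le_trans ler01 q1 | rewrite subr_ge0 ltW].
have r1 : q * (p%:R - 1) / (q * p%:R - 1) <= 1.
  by rewrite ler_pdivrMr // mul1r; nra.
apply/andP; split; first exact: mulr_ge0.
by rewrite -[X in _ <= X]mul1r ler_wpM2r.
Qed.


Lemma key_bound {R : realType} (b : R) (sigma : nat -> R)
  d (Omega : measurableType d) (P : probability Omega R)
  (X : nat -> nat -> Omega -> rat) (T S0 : R) :
  0 < b -> (forall p : nat, 0 <= sigma p) ->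
  (\sum_(0 <= p <oo | prime p) (sigma p)%:E = S0%:E)%E ->
  (forall (p k : nat) (w : Omega), prime p -> in_Gp p (X p k w)) ->
  (forall (p k : nat) (q : rat), prime p -> measurable [set w | X p k w = q]) ->
  (forall (p k j : nat), prime p -> (0 < j)%N ->
     P [set w | padic_abs p (X p k w) = (p%:R : R) ^+ j] =
     (((p%:R : R) `^ b - 1) * (p%:R : R) `^ (- (j%:R * b)))%:E) ->
  0 < T -> forall m (lambda : R), 2 <= lambda ->
  ((1 - (T * S0) * ((lambda / 2) `^ b)^-1)%:E <= P (sup_event X b sigma m T lambda))%E.
Proof.
move=> b0 sig0 hS inG hX hd T0 m lambda l2.
set c := lambda / 2.
have c1 : 1 <= c by rewrite /c ler_pdivlMr //; lra.
set E := sup_event X b sigma m T lambda.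
have mE : measurable E by exact: event_meas.
pose Bad p k := [set w | (c * (p ^ m.+1)%:R < padic_abs p (X p k w))%R].
pose Np p := Num.truncn (Dp b sigma p * p%:R `^ (m%:R * b) * T).
pose F n := if prime n then \bigcup_(k in `I_(Np n)) Bad n k else set0.
have mBad p k : prime p -> measurable (Bad p k).
  move=> pp; exact: (@fib_meas _ _ (X p k) (fun q => hX p k q pp)
    (fun y => c * (p ^ m.+1)%:R < (padic_abs p y : R))).
have mF n : measurable (F n).
  rewrite /F; case: ifP => pn //.
  by apply: bigcup_measurable => k _; apply: mBad.
have incl : ~` E `<=` \bigcup_n F n.
  move=> w nE; case: (pselect ((\bigcup_n F n) w)) => // hw; exfalso; apply: nE.
  rewrite /E /sup_event /=.
  apply: (@le_lt_trans _ _ c%:E); last by rewrite lte_fin /c; lra.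
  apply: ub_ereal_sup => _ [p [s [pp s0 sT ->]]].
  rewrite lee_fin /xpath.
  apply: val_bound => // k kn; split; first exact: inG.
  rewrite leNgt; apply/negP => hb; apply: hw; exists p => //.
  rewrite /F pp; exists k => //=.
  apply: (leq_trans kn); apply: le_truncn.
  have [D0 _] := andP (@Dp_bounds R b sigma p pp b0 (sig0 p)).
  rewrite ler_wpM2l // mulr_ge0 //; exact: powR_ge0.
set beta := (c `^ b)^-1.
have cb0 : 0 < c `^ b by apply: powR_gt0; lra.
have hF n : (P (F n) <= (if prime n then ((T * beta) * sigma n)%:E else 0))%E.
  rewrite /F; case: ifP => pn; last by rewrite measure0.
  have p0 : (0 < n)%N by apply: prime_gt0.
  set v := (n%:R : R) `^ b.
  have v0 : 0 < v by apply: powR_gt0; rewrite ltr0n.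
  rewrite bigcup_mkord.
  apply: le_trans (@fin_bound R d Omega P (Bad n) ((c `^ b * v ^+ m)^-1) _ _ (Np n)) _.
  - by move=> k; apply: mBad.
  - move=> k; exact: (@prob_bad2 R b d Omega P X n k c m b0 pn c1 (fun q => hX n k q pn)
         (fun j => hd n k j pn)).
  rewrite lee_fin.
  have hpow : (n%:R : R) `^ (m%:R * b) = v ^+ m.
    by rewrite mulrC powRrM powR_mulrn // powR_ge0.
  have [D0 D1] := andP (@Dp_bounds R b sigma n pn b0 (sig0 n)).
  have hN : ((Np n)%:R : R) <= Dp b sigma n * v ^+ m * T.
    rewrite /Np hpow truncn_le.
    apply: mulr_ge0; last exact: ltW.
    by apply: mulr_ge0 => //; apply: exprn_ge0; apply: ltW.
  apply: le_trans (ler_wpM2r _ hN) _.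
    by rewrite invr_ge0 mulr_ge0 ?exprn_ge0 ?ltW.
  have vm : v ^+ m != 0 by rewrite expf_neq0 // gt_eqF.
  have cn : c `^ b != 0 by rewrite gt_eqF.
  have -> : Dp b sigma n * v ^+ m * T / (c `^ b * v ^+ m) = (T * beta) * Dp b sigma n.
    by rewrite /beta; field; apply/andP.
  apply: ler_wpM2l => //.
  by rewrite mulr_ge0 ?invr_ge0 ?ltW.
have hU : (P (~` E) <= \sum_(0 <= n <oo) P (F n))%E.
  have := @measure_sigma_subadditive _ _ _ P (~` E) F mF (measurableC mE) incl.
  done.
have hsum : (\sum_(0 <= n <oo) P (F n) <= ((T * beta) * S0)%:E)%E.
  apply: (@le_trans _ _ (\sum_(0 <= n <oo) (if prime n then ((T * beta) * sigma n)%:E else 0))%E).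
    by apply: lee_nneseries => [n _ _|n _]; [exact: measure_ge0|exact: hF].
  rewrite -eseries_mkcond.
  under eq_eseriesr do rewrite EFinM.
  rewrite nneseriesZl; last by move=> i _; rewrite lee_fin.
  by rewrite hS -EFinM.
have hC := probability_setC P mE.
have hle := le_trans hU hsum.
move: hle; rewrite hC.
have h0 : (0 <= P E)%E by apply: measure_ge0.
move: h0; case: (P E) => [x| |] //=.
  rewrite -EFinB !lee_fin /beta -/c => h0 h1.
  have -> : T * S0 * (c `^ b)^-1 = T * (c `^ b)^-1 * S0 by rewrite mulrAC.
  lra.
by move=> _ _; rewrite leey.
Qed.


Theorem proposition4 (R : realType) (b : R) (sigma : nat -> R)
  (d : measure_display) (Omega : measurableType d) (P : probability Omega R)
  (X : nat -> nat -> Omega -> rat) :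
  0 < b ->
  (forall p : nat, 0 <= sigma p) ->
  (\sum_(0 <= p <oo | prime p) (sigma p)%:E < +oo)%E ->
  (* X p k is the (k+1)-th step X^{(p)}_{k+1}; it takes values in G_p *)
  (forall (p k : nat) (w : Omega), prime p -> in_Gp p (X p k w)) ->
  (forall (p k : nat) (q : rat), prime p -> measurable [set w | X p k w = q]) ->
  (* Pr(|X^{(p)}|_p = p^j) = (p^b - 1) p^{-jb} for every integer j >= 1 *)
  (forall (p k j : nat), prime p -> (0 < j)%N ->
     P [set w | padic_abs p (X p k w) = (p%:R : R) ^+ j] =
     (((p%:R : R) `^ b - 1) * (p%:R : R) `^ (- (j%:R * b)))%:E) ->
  (* conditionally on |X^{(p)}|_p, X^{(p)} is uniform *)
  (forall (p k : nat) (x y : rat), prime p -> in_Gp p x -> in_Gp p y ->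
     (padic_abs p x : R) = padic_abs p y ->
     P [set w | X p k w = x] = P [set w | X p k w = y]) ->
  (* mutual independence of all the X^{(p)}_k, p prime, k >= 1 *)
  (forall (s : seq (nat * nat)) (x : nat * nat -> rat),
     uniq s -> all (fun i => prime i.1) s ->
     P [set w | forall i, i \in s -> X i.1 i.2 w = x i] =
     (\prod_(i <- s) P [set w | X i.1 i.2 w = x i])%E) ->
  forall T : R, 0 < T ->
    (fun lambda : R =>
       limn_einf (fun m : nat => P (sup_event X b sigma m T lambda)))
      x @[x --> +oo] --> 1%E.
Proof.
move=> b0 sig0 hfin inG hX hd _ _ T T0.
set S := (\sum_(0 <= p <oo | prime p) (sigma p)%:E)%E in hfin.
have S0 : (0 <= S)%E by apply: nneseries_ge0 => n _; rewrite lee_fin.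
have hS : S = (fine S)%:E by rewrite fineK // ge0_fin_numE.
apply: (@squeeze_cvge _ _ _ R
   (fun l : R => (1 - (T * fine S) * ((l / 2) `^ b)^-1)%:E) _ (fun _ => 1%E)).
- exists 2; split; first by rewrite num_real.
  move=> l l2; apply: einf_bounds => m; apply/andP; split.
    apply: (@key_bound R b sigma d Omega P X T (fine S) b0 sig0 _ inG hX hd T0 m l); last exact: ltW.
    by rewrite -hS.
  by apply: probability_le1; apply: event_meas.
- apply: cvg_EFin; first exact: nearW.
  exact: powR_inv_cvg.
- exact: cvg_cst.
Qed.
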